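(* Let $A$ be a finite alphabet. Define $P,H\in I(A^* )$ by $P(u,v)=\binom{v}{u}$ and $H(u,v)=\binom{v}{u}\eta(u,v)$. Then $P=e^H$, where $e^H=\delta+H+\frac{1}{2!}H^2+\frac{1}{3!}H^3+\cdots$ (each entry of this series is a finite sum).
   Context: $A^*$ is the set of finite words over the finite alphabet $A$; $|w|$ is the length of $w$. For words $u=a_1\cdots a_k$ and $v=b_1\cdots b_n$, $\binom{v}{u}$ denotes the number of order-preserving injections $\varphi:[k]\to[n]$ with $a_i=b_{\varphi(i)}$ for all $i$ (occurrences of $u$ as a subsequence of $v$). $A^*$ is partially ordered by $u\le v$ iff $\binom{v}{u}>0$. For a locally finite poset $Q$, the incidence algebra $I(Q)$ over $\mathbb{Q}$ consists of all functions $F$ on pairs $(x,y)$ with $x\le y$, with convolution $(FG)(x,y)=\sum_{x\le z\le y}F(x,z)G(z,y)$ and identity $\delta(x,y)=[x=y]$ (Iverson bracket). $\eta(x,y)=[y\text{ covers }x]$; in $A^*$, $v$ covers $u$ iff $u\le v$ and $|v|=|u|+1$. *)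

(* Defs.v *)
From HB Require Import structures.
From mathcomp Require Import all_boot all_order all_algebra.
Set Implicit Arguments. Unset Strict Implicit. Unset Printing Implicit Defensive.
Import Order.TTheory GRing.Theory Num.Theory.

(* binom v u : number of order-preserving injections phi : [|u|] -> [|v|]
   with u_i = v_(phi i), i.e. occurrences of u as a subsequence of v. *)
Definition binom (A : finType) (v u : seq A) : nat :=
  #|[set f : {ffun 'I_(size u) -> 'I_(size v)} |
      [forall i : 'I_(size u), forall j : 'I_(size u), (i < j)%N ==> (f i < f j)%N] &&
      [forall i : 'I_(size u), tnth (in_tuple u) i == tnth (in_tuple v) (f i)]]|.

Definition swle (A : finType) (u v : seq A) : bool := (0 < binom v u)%N.

Definition covers (A : finType) (u v : seq A) : bool :=
  swle u v && (size v == (size u).+1).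

Local Open Scope ring_scope.

(* Incidence functions on A^* with values in rat (only values on pairs x <= y matter). *)
Definition incfun (A : finType) := seq A -> seq A -> rat.

Definition idelta (A : finType) : incfun A := fun x y => (x == y)%:R.

(* Convolution: sum over z with x <= z <= y; every such z has |z| <= |y|,
   so z ranges over words of length k <= |y| filtered by interval membership. *)
Definition iconv (A : finType) (F G : incfun A) : incfun A :=
  fun x y => \sum_(k < (size y).+1)
               \sum_(t : k.-tuple A | swle x t && swle (t : seq A) y)
                  F x t * G t y.

Fixpoint ipow (A : finType) (F : incfun A) (k : nat) : incfun A :=
  match k with
  | 0 => @idelta A
  | k'.+1 => iconv (ipow F k') F
  end.

Definition Pfun (A : finType) : incfun A := fun u v => (binom v u)%:R.
Definition Hfun (A : finType) : incfun A :=
  fun u v => (binom v u)%:R * (covers u v)%:R.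

(* Main.v *)
Require Import Defs.
From HB Require Import structures.
From mathcomp Require Import all_boot all_order all_algebra.
From mathcomp Require Import zify ring.
Import Order.TTheory GRing.Theory Num.Theory.
Set Implicit Arguments. Unset Strict Implicit. Unset Printing Implicit Defensive.

Section S1.
Variable A : finType.

Fixpoint sb (v u : seq A) : nat :=
  match v, u with
  | _, [::] => 1
  | [::], _ :: _ => 0
  | b :: v', a :: u' => sb v' (a :: u') + (a == b) * sb v' u'
  end.

Lemma sb_nil v : sb v [::] = 1.
Proof. by case: v. Qed.

Lemma sb_gt y x : size y < size x -> sb y x = 0.
Proof.
elim: y x => [|b y IH] [|a x] //= H.
rewrite IH /=; last lia.
by rewrite IH ?muln0 //; lia.
Qed.

Lemma sb_eq y x : size x = size y -> sb y x = (x == y).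
Proof.
elim: y x => [|b y IH] [|a x] //= [H].
rewrite sb_gt /=; last lia.
by rewrite IH // eqseq_cons; case: (a == b); case: (x == y).
Qed.

Fixpoint dels (y : seq A) : seq (seq A) :=
  if y is b :: y' then y' :: map (cons b) (dels y') else [::].

Lemma dels_size y d : d \in dels y -> (size d).+1 = size y.
Proof.
elim: y d => [|b y IH] d //=; rewrite inE => /orP [/eqP -> //|].
by case/mapP => d' /IH <- ->.
Qed.

Lemma count_dels y t : (size t).+1 = size y -> count_mem t (dels y) = sb y t.
Proof.
elim: y t => [|b y IH] t //= Ht.
case: t Ht => [|a t] /= Ht.
  by case: y {IH} Ht.
rewrite count_map.
have -> : count (preim (cons b) (pred1 (a :: t))) (dels y) = (a == b) * count_mem t (dels y).
  have -> : count (preim (cons b) (pred1 (a :: t))) (dels y) =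
     count (fun d => (b == a) && (d == t)) (dels y).
    by apply: eq_count => d; rewrite /= eqseq_cons.
  have [eab|nab] := eqVneq a b.
    by rewrite mul1n; elim: (dels y) => //= d s ->.
  rewrite mul0n; by elim: (dels y) => //= d s ->.
rewrite IH; last by apply/eqP; rewrite -eqSS Ht.
congr (_ + _).
rewrite (sb_eq (x := a :: t)); last by apply/eqP; rewrite /= -eqSS Ht.
exact: (congr1 nat_of_bool (eq_sym _ _)).
Qed.

Lemma sum_dels y x : \sum_(d <- dels y) sb d x = (size y - size x) * sb y x.
Proof.
elim: y x => [|b y IH] x /=; first by rewrite big_nil.
rewrite big_cons big_map.
case: x => [|a x].
  have := IH [::]; rewrite sb_nil muln1 subn0 => E.
  rewrite (eq_bigr (fun _ => 1)) in E; last by move=> *; rewrite sb_nil.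
  by rewrite (eq_bigr (fun _ => 1)) // E subn0 muln1 add1n.
rewrite /=.
under eq_bigr do rewrite /=.
rewrite big_split /= -big_distrr /= !IH /=.
rewrite subSS.
have [Hle|Hlt] := leqP (size y) (size x).
  rewrite (sb_gt (x := a :: x)) /=; last lia.
  have -> : size y - size x = 0 by lia.
  have -> : size y - (size x).+1 = 0 by lia.
  by rewrite !mul0n muln0.
have -> : size y - size x = (size y - (size x).+1).+1 by lia.
move: (size y - (size x).+1) (sb y (a :: x)) (sb y x) (nat_of_bool (a == b)) => D s1 s2 c.
ring.
Qed.

End S1.

Section S3.
Variable A : finType.

Lemma monoP m n (f : {ffun 'I_m -> 'I_n}) :
  reflect (forall i j : 'I_m, i < j -> f i < f j)
    [forall i : 'I_m, forall j : 'I_m, (i < j) ==> (f i < f j)].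
Proof.
apply: (iffP forallP) => H i.
  by move=> j; exact: (implyP (forallP (H i) j)).
by apply/forallP => j; apply/implyP; exact: H.
Qed.

Lemma labE (x0 : A) (u v : seq A) (f : {ffun 'I_(size u) -> 'I_(size v)}) :
  [forall i, tnth (in_tuple u) i == tnth (in_tuple v) (f i)] =
  [forall i : 'I_(size u), nth x0 u i == nth x0 v (f i)].
Proof. by apply: eq_forallb => i; rewrite !(tnth_nth x0). Qed.

Lemma binom_nil_r (v : seq A) : binom v [::] = 1.
Proof.
rewrite /binom.
rewrite (_ : [set f | _] = setT); first by rewrite cardsT card_ffun !card_ord.
apply/setP => f; rewrite !inE; apply/andP; split; apply/forallP => -[] //.
Qed.

Lemma binom_nil_l (a : A) u : binom [::] (a :: u) = 0.
Proof.
rewrite /binom; apply/eqP; rewrite cards_eq0; apply/eqP/setP => f.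
by case: (f ord0).
Qed.

Lemma bump0' i : bump 0 i = i.+1.
Proof. by rewrite /bump leq0n. Qed.

Definition L1 m n (g : {ffun 'I_m -> 'I_n}) : {ffun 'I_m -> 'I_n.+1} :=
  [ffun i => lift ord0 (g i)].
Definition L2 m n (h : {ffun 'I_m -> 'I_n}) : {ffun 'I_m.+1 -> 'I_n.+1} :=
  [ffun i => if unlift ord0 i is Some j then lift ord0 (h j) else ord0].

Lemma L1_inj m n : injective (@L1 m n).
Proof.
move=> g1 g2 E; apply/ffunP => i.
by have := congr1 (fun f : {ffun _ -> _} => f i) E; rewrite !ffunE => /lift_inj.
Qed.

Lemma L2_0 m n (h : {ffun 'I_m -> 'I_n}) : L2 h ord0 = ord0.
Proof. by rewrite ffunE unlift_none. Qed.
Lemma L2_lift m n (h : {ffun 'I_m -> 'I_n}) j : L2 h (lift ord0 j) = lift ord0 (h j).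
Proof. by rewrite ffunE liftK. Qed.

Lemma L2_inj m n : injective (@L2 m n).
Proof.
move=> g1 g2 E; apply/ffunP => i.
by have := congr1 (fun f : {ffun _ -> _} => f (lift ord0 i)) E; rewrite !L2_lift => /lift_inj.
Qed.


Lemma binom_cons (b a : A) v u :
  binom (b :: v) (a :: u) = binom v (a :: u) + (a == b) * binom v u.
Proof.
rewrite /binom.
set E := [set f : {ffun 'I_(size (a :: u)) -> 'I_(size (b :: v))} | _].
rewrite -(cardsID [set f : {ffun 'I_(size (a :: u)) -> 'I_(size (b :: v))} | f ord0 == ord0] E).
rewrite addnC; congr (_ + _).
  rewrite -[RHS](card_imset _ (@L1_inj _ _)); apply: eq_card => f.
  rewrite !inE; apply/idP/imsetP.
    case/andP => Hf0 /andP[/monoP Hm Hl].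
    have H0 : 0 < f ord0.
      by rewrite lt0n; apply: contra Hf0 => /eqP E0; apply/eqP/val_inj.
    have Hpos i : 0 < f i.
      case: (posnP i) => [i0|ip]; last exact: leq_trans H0 (ltnW (Hm ord0 i ip)).
      by rewrite (_ : i = ord0) //; apply: val_inj.
    have Hlt i : (f i).-1 < size v.
      by rewrite -ltnS prednK // (ltn_ord (f i)).
    exists [ffun i => Ordinal (Hlt i)].
      rewrite inE; apply/andP; split.
        apply/monoP => i j ij; rewrite !ffunE /=.
        by move: (nat_of_ord (f i)) (nat_of_ord (f j)) (Hm i j ij) (Hpos i) => [|x] [|y].
      rewrite (labE a); rewrite (labE a) in Hl.
      apply/forallP => i; rewrite ffunE /=.
      by have := forallP Hl i; rewrite -(prednK (Hpos i)) /=.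
    apply/ffunP => i; rewrite !ffunE; apply: val_inj.
    by rewrite /= /bump /= add1n prednK.
  case=> g; rewrite inE => /andP[/monoP Hm Hl] ->.
  apply/andP; split.
    by rewrite ffunE; apply/eqP => /(congr1 val); rewrite /= bump0'.
  apply/andP; split.
    by apply/monoP => i j ij; rewrite !ffunE /= !bump0' ltnS Hm.
  rewrite (labE a); rewrite (labE a) in Hl.
  by apply/forallP => i; rewrite ffunE /= ?add0n; apply: (forallP Hl).
have [eab|nab] := eqVneq a b; last first.
  rewrite mul0n; apply/eqP; rewrite cards_eq0; apply/eqP/setP => f.
  rewrite !inE; apply/negbTE/negP => /andP[/andP[_ Hl] /eqP Hf0].
  rewrite (labE a) in Hl; have := forallP Hl ord0; rewrite Hf0 /=.
  by rewrite (negbTE nab).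
subst b; rewrite mul1n.
rewrite -[RHS](card_imset _ (@L2_inj _ _)); apply: eq_card => f.
rewrite !inE; apply/idP/imsetP.
  case/andP => /andP[/monoP Hm Hl] /eqP Hf0.
  have Hpos (j : 'I_(size u)) : 0 < f (lift ord0 j).
    have := Hm ord0 (lift ord0 j); rewrite /= bump0' Hf0 /=; exact.
  have Hlt (j : 'I_(size u)) : (f (lift ord0 j)).-1 < size v.
    by rewrite -ltnS prednK // (ltn_ord (f _)).
  exists [ffun j => Ordinal (Hlt j)].
    rewrite inE; apply/andP; split.
      apply/monoP => i j ij; rewrite !ffunE /=.
      have := Hm (lift ord0 i) (lift ord0 j); rewrite /= !bump0' ltnS => /(_ ij).
      by move: (nat_of_ord (f (lift ord0 i))) (nat_of_ord (f (lift ord0 j))) (Hpos i) => [|x] [|y].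
    rewrite (labE a); rewrite (labE a) in Hl.
    apply/forallP => j; rewrite ffunE /=.
    by have := forallP Hl (lift ord0 j); rewrite -(prednK (Hpos j)) /= ?add0n.
  apply/ffunP => i; rewrite ffunE; case: unliftP => [j ->|->].
    by rewrite ffunE; apply: val_inj; rewrite /= /= bump0' /= prednK.
  exact: Hf0.
case=> h; rewrite inE => /andP[/monoP Hm Hl] ->.
rewrite L2_0 eqxx andbT; apply/andP; split.
  apply/monoP => i j.
  case: (unliftP ord0 i) => [i' ->|->]; case: (unliftP ord0 j) => [j' ->|->];
    rewrite ?L2_0 ?L2_lift /= ?bump0' ?add0n //= ?ltnS; exact: Hm.
rewrite (labE a); rewrite (labE a) in Hl.
apply/forallP => i; case: (unliftP ord0 i) => [i' ->|->].
  by rewrite L2_lift /= ?bump0' ?add0n; apply: (forallP Hl).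
by rewrite L2_0.
Qed.

End S3.

Section S4.
Variable A : finType.

Lemma binom_sb (v u : seq A) : binom v u = sb v u.
Proof.
elim: v u => [|b v IH] [|a u]; rewrite ?binom_nil_r ?sb_nil //.
  by rewrite binom_nil_l.
by rewrite binom_cons !IH.
Qed.

Lemma tuple_sum n (s : seq (seq A)) (g : seq A -> nat) :
  all (fun d => size d == n) s ->
  \sum_(t : n.-tuple A) count_mem (val t) s * g t = \sum_(d <- s) g d.
Proof.
elim: s => [|d s IH] /=.
  by move=> _; rewrite big_nil big1 // => t _; rewrite mul0n.
case/andP => Hd Hs; rewrite big_cons -IH //.
under eq_bigr do rewrite mulnDl.
rewrite big_split /=; congr (_ + _).
pose td : n.-tuple A := Tuple Hd.
rewrite (bigD1 td) //= eqxx mul1n big1 ?addn0 // => t ntd.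
have -> : (d == val t) = false.
  apply/negbTE/eqP => E; move/eqP: ntd; apply; apply: val_inj; by rewrite /= E.
by rewrite mul0n.
Qed.

Lemma key n (y x : seq A) : size y = n.+1 ->
  \sum_(t : n.-tuple A) sb y t * sb t x = (size y - size x) * sb y x.
Proof.
move=> Hy; rewrite -sum_dels -(@tuple_sum n).
  by apply: eq_bigr => t _; rewrite count_dels // size_tuple Hy.
by apply/allP => d /dels_size; rewrite Hy => -[->].
Qed.


Lemma mul_pos_and n (e : bool) : n * ((0 < n) && e) = n * e.
Proof. by case: n. Qed.

Lemma sumH k (x y : seq A) :
  (\sum_(j < (size y).+1) \sum_(t : j.-tuple A)
     k`! * sb t x * (size t == size x + k) * (sb y t * (size y == (size t).+1))
  = (k.+1)`! * sb y x * (size y == size x + k.+1))%N.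
Proof.
rewrite (eq_bigr (fun j : 'I_(size y).+1 => (((j : nat) == size x + k) * (size y == j.+1) * k`!) *
   \sum_(t : j.-tuple A) sb y t * sb t x)); last first.
  move=> j _; rewrite big_distrr /=; apply: eq_bigr => t _; rewrite size_tuple; ring.
have [Hy|Hy] := eqVneq (size y) (size x + k.+1).
  have j0lt : size x + k < (size y).+1 by rewrite Hy; lia.
  have Z : (\sum_(i < (size y).+1 | i != Ordinal j0lt)
     (((i : nat) == size x + k) * (size y == i.+1) * k`! * \sum_(t : i.-tuple A) sb y t * sb t x) = 0)%N.
    apply: big1 => j nj; rewrite (_ : ((j : nat) == size x + k) = false) ?mul0n //.
    apply/negbTE; apply: contra nj => /eqP E; apply/eqP/val_inj => /=; exact: E.
  rewrite (bigD1 (Ordinal j0lt)) //= Z addn0.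
  rewrite /= eqxx (key (n := size x + k)); last by rewrite Hy addnS.
  rewrite (_ : size y - size x = k.+1); last by rewrite Hy; lia.
  rewrite Hy addnS eqxx factS /= !mul1n muln1; ring.
rewrite muln0 big1 // => j _.
case: eqP => [->|]; last by rewrite !mul0n.
by rewrite -addnS (negbTE Hy) muln0 mul0n.
Qed.

Local Open Scope ring_scope.
Lemma iconvH k (x y : seq A) :
  (forall x t, ipow (@Hfun A) k x t = (k`! * sb t x * (size t == size x + k)%N)%N%:R) ->
  iconv (ipow (@Hfun A) k) (@Hfun A) x y =
  (\sum_(j < (size y).+1) \sum_(t : j.-tuple A)
     k`! * sb t x * (size t == size x + k)%N * (sb y t * (size y == (size t).+1)))%N%:R.
Proof.
move=> IH; rewrite /iconv natr_sum; apply: eq_bigr => j _.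
rewrite natr_sum big_mkcond /=; apply: eq_bigr => t _.
rewrite IH /Hfun /covers /swle !binom_sb.
case: ifP => [_|].
  by rewrite -!natrM mul_pos_and mulnA.
move/negbT; rewrite negb_and -!leqNgt !leqn0 => /orP [/eqP->|/eqP->];
  by rewrite ?muln0 ?mul0n.
Qed.

Lemma Hpow k (x y : seq A) :
  ipow (@Hfun A) k x y = (k`! * sb y x * (size y == size x + k)%N)%N%:R.
Proof.
elim: k x y => [|k IH] x y /=.
  rewrite /idelta addn0 mul1n.
  have [Hs|Hs] := eqVneq (size x) (size y).
    by rewrite muln1 sb_eq.
  rewrite muln0.
  have -> : (x == y) = false by apply/negbTE; apply: contra Hs => /eqP ->.
  by [].
by rewrite iconvH // sumH.
Qed.

End S4.

Unset Implicit Arguments.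
Local Open Scope ring_scope.
Theorem mainTheorem2 (A : finType) (u v : seq A) :
  swle u v ->
  exists N : nat, forall n : nat, (N <= n)%N ->
    \sum_(k < n) (k`!%:R)^-1 * ipow (@Hfun A) k u v = @Pfun A u v.
Proof.
rewrite /swle binom_sb => Hp.
have Hle : (size u <= size v)%N.
  by rewrite leqNgt; apply/negP => /sb_gt H; move: Hp; rewrite H.
exists (size v - size u).+1 => n Hn.
rewrite (bigD1 (Ordinal Hn)) //= big1 ?addr0.
  rewrite Hpow /Pfun binom_sb (_ : (size u + (size v - size u))%N = size v); last by lia.
  rewrite eqxx muln1 natrM mulrA mulVf ?mul1r //.
  by rewrite pnatr_eq0 -lt0n fact_gt0.
move=> k nk; rewrite Hpow.
rewrite (_ : (size v == size u + k)%N = false) ?muln0 ?mulr0 //.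
apply/negbTE; apply: contra nk => /eqP E; apply/eqP/val_inj => /=; lia.
Qed.
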